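(* Let $n\ge3$, let $x_1,\dots,x_n$ be distinct points of $\mathbb{CP}^1$ and let $0<\alpha_i<1$ be real numbers satisfying $\sum_{i}(1-\alpha_i) < 2$ and, for every $1\le j\le n$, $1-\alpha_j < \sum_{i\ne j}(1-\alpha_i)$. Put $a_{i1} = \frac{1-\alpha_i}{2}$ and $a_{i2}=\frac{1+\alpha_i}{2}$. Let $E=\mathcal{O}(1)\oplus\mathcal{O}(n-1)$ over $\mathbb{CP}^1$ and let $F_i\subset E_{x_i}$ be lines such that (i) $F_i\cap \mathcal{O}(n-1)_{x_i}=0$ for all $i$, and (ii) there is no degree $1$ line subbundle $L\subset E$ with $F_i\subset L_{x_i}$ for all $i$. Then the parabolic bundle $E_*$ with flags $F_i$ and weights $a_{i1}<a_{i2}$ at $x_i$ is stable: for every holomorphic line subbundle $L\subset E$, $$\mathrm{pardeg}\, L_* := \deg L - \sum_{i:\,F_i\subset L_{x_i}} a_{i1} - \sum_{i:\,F_i\not\subset L_{x_i}} a_{i2} < 0 .$$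
   Context: The parabolic structure on $E$ is: at each $x_i$, the line $F_i$ carries the smaller weight $a_{i1}$ and the quotient $E_{x_i}/F_i$ carries the larger weight $a_{i2}$; the parabolic degree of $E_*$ is $\deg E - \sum_i (a_{i1}+a_{i2}) = 0$. The induced parabolic structure on a line subbundle $L$ has weight $a_{i1}$ at $x_i$ if $F_i\subset L_{x_i}$ and $a_{i2}$ otherwise, giving the displayed formula for $\mathrm{pardeg}\,L_*$. *)

(* Defs.v *)
From HB Require Import structures.
From mathcomp Require Import all_boot all_order all_algebra.
From mathcomp Require Import reals.
From mathcomp Require Import complex.
Set Implicit Arguments. Unset Strict Implicit. Unset Printing Implicit Defensive.
Import Order.TTheory GRing.Theory Num.Theory.
Local Open Scope ring_scope.

(* A binary form (homogeneous polynomial in two variables (u,v)) of degree k,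
   encoded by the univariate polynomial of its coefficients:
   p = sum_j p_j X^j  represents  sum_{j <= k} p_j u^j v^(k-j). *)
Definition is_form (F : ringType) (k : int) (p : {poly F}) : bool :=
  if (k < 0)%R then p == 0 else (size p <= `|k|.+1)%N.

Definition form_eval (F : ringType) (k : int) (p : {poly F}) (w : F * F) : F :=
  \sum_(j < size p) p`_j * w.1 ^+ j * w.2 ^+ (`|k| - j).

(* E = O(1) (+) O(e) over P^1 (here e = n-1).  A line subbundle L ~ O(d) of E
   is the image of a fibrewise-injective map O(d) -> E, i.e. a pair (p,q) of
   binary forms of degrees 1-d and e-d with no common zero on P^1.  Its fibre
   at the point with representative w is spanned by
   (form_eval (1-d) p w, form_eval (e-d) q w), in the trivialisation of
   E_w ~ C^2 given by evaluating sections of O(1), O(e) at w. *)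
Definition line_subbundle (F : ringType) (e : nat) (d : int) (p q : {poly F}) :=
  [/\ is_form (1 - d) p, is_form (e%:Z - d) q &
      forall w : F * F, w != (0, 0) ->
        form_eval (1 - d) p w != 0 \/ form_eval (e%:Z - d) q w != 0].

(* The flag line spanned by f (f != 0) in E_w lies in the fibre L_w. *)
Definition flag_in (F : ringType) (e : nat) (d : int) (p q : {poly F})
  (w f : F * F) : bool :=
  f.1 * form_eval (e%:Z - d) q w - f.2 * form_eval (1 - d) p w == 0.

Definition pardeg (F : ringType) (R : numDomainType) (n : nat) (d : int)
  (p q : {poly F}) (x f : 'I_n -> F * F) (a1 a2 : 'I_n -> R) : R :=
  d%:~R - \sum_(i < n | flag_in n.-1 d p q (x i) (f i)) a1 i
        - \sum_(i < n | ~~ flag_in n.-1 d p q (x i) (f i)) a2 i.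

(* Main.v *)
Require Import Defs.
From HB Require Import structures.
From mathcomp Require Import all_boot all_order all_algebra.
From mathcomp Require Import reals.
From mathcomp Require Import complex.
From mathcomp Require Import zify ring lra.
Import Order.TTheory GRing.Theory Num.Theory.
Local Open Scope ring_scope.

Lemma pardegE (F : ringType) (R : numDomainType) (n : nat) (d : int)
  (p q : {poly F}) (x f : 'I_n -> F * F) (a1 a2 : 'I_n -> R) :
  pardeg d p q x f a1 a2 = d%:~R - \sum_(i < n)
     (if flag_in n.-1 d p q (x i) (f i) then a1 i else a2 i).
Proof.
rewrite /pardeg [in RHS](bigID (fun i => flag_in n.-1 d p q (x i) (f i))) /=.
rewrite opprD addrA.
rewrite [X in _ = _ - X - _](eq_bigr a1); last by move=> i ->.
rewrite [X in _ = _ - _ - X](eq_bigr a2) //.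
by move=> i /negbTE ->.
Qed.

Lemma form_eval0 (F : ringType) k (w : F * F) : form_eval k 0 w = 0.
Proof. by rewrite /form_eval size_poly0 big_ord0. Qed.

Theorem mainTheorem3 (R : realType) (n : nat) (x f : 'I_n -> R[i] * R[i])
    (alpha : 'I_n -> R) :
  (3 <= n)%N ->
  (* the x_i are points of CP^1 (nonzero representatives), pairwise distinct *)
  (forall i, x i != (0, 0)) ->
  (forall i j, i != j -> (x i).1 * (x j).2 - (x i).2 * (x j).1 != 0) ->
  (forall i, 0 < alpha i < 1) ->
  \sum_(i < n) (1 - alpha i) < 2 ->
  (forall j, 1 - alpha j < \sum_(i < n | i != j) (1 - alpha i)) ->
  (* F_i is a line in E_{x_i} *)
  (forall i, f i != (0, 0)) ->
  (* (i) F_i does not meet O(n-1)_{x_i} *)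
  (forall i, (f i).1 != 0) ->
  (* (ii) no degree 1 line subbundle contains all the flags *)
  ~ (exists p q : {poly R[i]}, line_subbundle n.-1 1 p q /\
       forall i, flag_in n.-1 1 p q (x i) (f i)) ->
  (* stability *)
  forall (d : int) (p q : {poly R[i]}), line_subbundle n.-1 d p q ->
    pardeg d p q x f (fun i => (1 - alpha i) / 2) (fun i => (1 + alpha i) / 2) < 0.
Proof.
move=> n3 xnz xdist alpha01 sum2 sumj fnz f1nz noL d p q Lpq.
rewrite pardegE.
pose w := (fun i : 'I_n => if flag_in n.-1 d p q (x i) (f i) then (1 - alpha i) / 2 else (1 + alpha i) / 2).
change (d%:~R - \sum_(i < n) w i < 0).
have a1pos : forall i, 0 < (1 - alpha i) / 2.
  by move=> i; have /andP[h1 h2] := alpha01 i; lra.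
have a12 : forall i, (1 - alpha i) / 2 <= w i.
  move=> i; rewrite /w; case: ifP => _ //.
  by have /andP[h1 h2] := alpha01 i; lra.
have i0 : 'I_n by exists 0%N; lia.
case: (lerP d 0) => hd.
  have : \sum_(i < n) (1 - alpha i) / 2 <= \sum_(i < n) w i by apply: ler_sum.
  have : 0 < \sum_(i < n) (1 - alpha i) / 2.
    rewrite (bigD1 i0) //=; apply: ltr_pwDl; first exact: a1pos.
    by apply: sumr_ge0 => i _; apply: ltW.
  have : d%:~R <= 0 :> R by rewrite -(ler_int R) in hd.
  lra.
case: (eqVneq d 1) => hd1.
  subst d.
  have [j hj] : exists j, ~~ flag_in n.-1 1 p q (x j) (f j).
    apply/existsP; rewrite -negb_forall; apply/negP => /forallP H.
    by apply: noL; exists p, q.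
  rewrite (bigD1 j) //= /w (negbTE hj) -/w.
  have : \sum_(i < n | i != j) (1 - alpha i) / 2 <= \sum_(i < n | i != j) w i.
    by apply: ler_sum.
  rewrite -mulr_suml.
  have := sumj j.
  rewrite /=. lra.
have hd2 : (2 <= d)%R by lia.
case: Lpq => hp hq hnz.
have p0 : p = 0.
  by move: hp; rewrite /is_form ifT ?(eqP _) //; [move/eqP|lia].
subst p.
have dle : (d <= (n.-1)%:Z)%R.
  case: (lerP d (n.-1)%:Z) => // hlt.
  move: hq; rewrite /is_form ifT; last by lia.
  move/eqP => q0; subst q.
  by case: (hnz (x i0) (xnz i0)); rewrite form_eval0 eqxx.
have noflag : forall i, ~~ flag_in n.-1 d 0 q (x i) (f i).
  move=> i; rewrite /flag_in form_eval0 mulr0 subr0 mulf_eq0 negb_or f1nz /=.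
  by case: (hnz (x i) (xnz i)) => //; rewrite form_eval0 eqxx.
have -> : \sum_(i < n) w i = \sum_(i < n) (1 + alpha i) / 2.
  by apply: eq_bigr => i _; rewrite /w (negbTE (noflag i)).
have hsum : \sum_(i < n) (1 + alpha i) / 2 + \sum_(i < n) (1 - alpha i) / 2 = n%:R.
  rewrite -big_split /=.
  rewrite (eq_bigr (fun _ => 1)); last by move=> i _; field.
  by rewrite sumr_const card_ord.
move: hsum; rewrite -[X in _ + X = _]mulr_suml.
have : d%:~R <= (n.-1)%:R :> R by rewrite -(ler_int R) in dle.
have hn : n = (n.-1).+1 by lia.
have hnR : (n%:R : R) = (n.-1)%:R + 1 by rewrite {1}hn -addn1 natrD.
rewrite hnR.
lra.
Qed.
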